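(* Let $n\ge 1$ and $\mathbf{x}\in\{0,1\}^n$. Let $\omega=\omega(\mathbf{x}')$ be the Hamming weight of the derivative sequence $\mathbf{x}'$, let $m$ be the number of 1-runs in $\mathbf{x}'$, and let $m_1$ be the number of 1-runs of length $1$ in $\mathbf{x}'$. Then (a) $|\Phi_1(\mathbf{x})| = 1+\omega = r(\mathbf{x})$; (b) $|\Phi_2(\mathbf{x})| = 1+m+\binom{\omega}{2}$; (c) $|\Phi_3(\mathbf{x})| = 1+m_1+m(\omega-3)+\binom{\omega}{3}-\binom{\omega}{2}+2\omega$.
   Context: A grain pattern of length $n$ is a subset $E\subseteq\{2,\dots,n\}$ containing no two consecutive integers. For such $E$, the map $\phi_E:\{0,1\}^n\to\{0,1\}^n$ sends $\mathbf{x}=(x_1,\dots,x_n)$ to $\mathbf{y}=(y_1,\dots,y_n)$ with $y_j=x_{j-1}$ if $j\in E$ and $y_j=x_j$ otherwise. For $t\ge0$, $\mathcal{E}_{n,t}$ is the set of grain patterns $E$ of length $n$ with $|E|\le t$, and $\Phi_t(\mathbf{x})=\{\phi_E(\mathbf{x}):E\in\mathcal{E}_{n,t}\}$ (a set, so distinct patterns giving the same sequence are counted once). A run of $\mathbf{x}$ is a maximal block of consecutive identical symbols; $r(\mathbf{x})$ is the number of runs of $\mathbf{x}$. The derivative sequence of $\mathbf{x}$ is $\mathbf{x}'=(x'_2,\dots,x'_n)$ with $x'_j=x_{j-1}\oplus x_j$ (addition mod 2); a 1-run of $\mathbf{x}'$ is a maximal block of consecutive 1s in $\mathbf{x}'$.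 Binomial coefficients $\binom{a}{b}$ are $0$ when $b>a\ge 0$. *)

(* Defs.v *)
From mathcomp Require Import all_boot all_order all_algebra.
Set Implicit Arguments. Unset Strict Implicit. Unset Printing Implicit Defensive.

(* Positions are 0-indexed: paper position j corresponds to index j-1. *)

Definition grain_pattern n (E : {set 'I_n}) : bool :=
  [forall i in E, 0 < (i : nat)] &&
  [forall i in E, forall j in E, (i : nat).+1 != j].

Definition phi n (E : {set 'I_n}) (x : n.-tuple bool) : n.-tuple bool :=
  [tuple (if i \in E then nth false x (i : nat).-1 else nth false x i) | i < n].

Definition Phi n (t : nat) (x : n.-tuple bool) : {set n.-tuple bool} :=
  [set phi E x | E in [set E : {set 'I_n} | grain_pattern E && (#|E| <= t)]].

Definition runs (s : seq bool) : nat :=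
  size [seq i <- iota 0 (size s) | (i == 0) || (nth false s i != nth false s i.-1)].

Definition dseq (s : seq bool) : seq bool :=
  [seq (nth false s i (+) nth false s i.+1) | i <- iota 0 (size s).-1].

Definition weight (s : seq bool) : nat := count id s.

Definition one_runs (s : seq bool) : nat :=
  size [seq i <- iota 0 (size s) |
         nth false s i && ((i == 0) || ~~ nth false s i.-1)].

Definition one_runs_len1 (s : seq bool) : nat :=
  size [seq i <- iota 0 (size s) |
         [&& nth false s i, ((i == 0) || ~~ nth false s i.-1)
           & ~~ nth false s i.+1]].

(* Main.v *)
Require Import Defs.
From mathcomp Require Import all_boot all_order all_algebra zify.

Lemma count_iotaS (P : pred nat) k :
  count P (iota 0 k.+1) = P 0 + count (fun i => P i.+1) (iota 0 k).
Proof. by rewrite /= -[1]/(1 + 0) iotaDl count_map. Qed.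

Lemma all_iotaS (P : pred nat) k :
  all P (iota 0 k.+1) = P 0 && all (fun i => P i.+1) (iota 0 k).
Proof. by rewrite /= -[1]/(1 + 0) iotaDl all_map. Qed.

Definition subm (a b : seq bool) :=
  (size b == size a) && all (fun i => nth false b i ==> nth false a i) (iota 0 (size a)).
Definition nocons (b : seq bool) :=
  all (fun i => ~~ (nth false b i && nth false b i.+1)) (iota 0 (size b)).
Definition Pv a t b := [&& subm a b, nocons b & count id b <= t].

Lemma subm_cons x a c b : subm (x :: a) (c :: b) = (c ==> x) && subm a b.
Proof. by rewrite /subm all_iotaS /= eqSS; case: (c ==> x); rewrite ?andbF. Qed.
Lemma subm_nil a : subm a [::] = (a == [::]).
Proof. by case: a. Qed.
Lemma subm_nil2 b : subm [::] b = (b == [::]).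
Proof. by case: b. Qed.
Lemma nocons_cons c b : nocons (c :: b) = ~~ (c && nth false b 0) && nocons b.
Proof. by rewrite /nocons all_iotaS. Qed.

Fixpoint valid (a : seq bool) (t : nat) : seq (seq bool) :=
  match a with
  | [::] => [:: [::]]
  | x :: a' =>
    let r := map (cons false) (valid a' t) in
    if x then match t with
      | 0 => r
      | t'.+1 => r ++ match a' with
                      | [::] => [:: [:: true]]
                      | _ :: a'' => map (cons true) (map (cons false) (valid a'' t'))
                      end
      end
    else r
  end.

Lemma mem_consmap (c0 c : bool) (b : seq bool) (s : seq (seq bool)) : (c :: b \in map (cons c0) s) = (c == c0) && (b \in s).
Proof.
apply/mapP/andP => [[z zs [-> ->]]|[/eqP -> bs]]; last by exists b.
by split.
Qed.

Lemma strong_ind (P : seq bool -> Prop) :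
  (forall a, (forall a', size a' < size a -> P a') -> P a) -> forall a, P a.
Proof.
move=> H a; elim: (size a).+1 {-2}a (ltnSn (size a)) => // k IH a' Ha'.
by apply: H => a'' Hs; apply: IH; apply: leq_trans Hs _.
Qed.

Lemma mem_valid a t b : (b \in valid a t) = Pv a t b.
Proof.
elim/strong_ind: a t b => [[|x a'] IH] t b.
  by rewrite /Pv subm_nil2 inE; case: b.
have IH1 : forall t b0, (b0 \in valid a' t) = Pv a' t b0 by move=> ? ?; apply: IH.
have IH2 : forall t b0, (b0 \in valid (behead a') t) = Pv (behead a') t b0.
  by move=> ? ?; apply: IH; case: (a') => //= ? ?; rewrite ltnS leqnSn.
clear IH.
case: b => [|c b'].
  rewrite /Pv subm_nil /=; apply/negbTE.
  case: x; case: t => [|t] /=; rewrite ?mem_cat; try (apply/negP; case/mapP=> ? _ //).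
  apply/norP; split; first by apply/negP; case/mapP.
  by case: a' IH1 IH2 => [|y a''] _ _ /=; [done | apply/negP; case/mapP].
case: c.
  rewrite /Pv subm_cons nocons_cons /=.
  have Hr : (true :: b' \in map (cons false) (valid a' t)) = false by rewrite mem_consmap.
  case: x; last by rewrite Hr.
  case: t Hr => [|t] Hr /=; first by rewrite Hr ltn0 !andbF.
  rewrite mem_cat Hr /= ltnS.
  case: a' IH1 IH2 Hr => [|y a''] IH1 IH2 Hr.
    by rewrite inE subm_nil2; case: b' {Hr} => //=.
  case: b' {Hr} => [|d b''] /=.
    by rewrite mem_consmap /=; apply/mapP => -[].
  rewrite mem_consmap /= mem_consmap subm_cons nocons_cons /=.
  by case: d => //=; rewrite andbF.
rewrite /Pv subm_cons nocons_cons /= -/(Pv a' t b') -IH1.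
have Hs : forall s, (false :: b' \in map (cons true) s) = false by move=> s; rewrite mem_consmap.
case: x => /=; last by rewrite mem_consmap.
case: t => [|t] /=; rewrite ?mem_consmap //.
rewrite mem_cat mem_consmap /=.
by case: a' IH1 IH2 => [|y a''] IH1 IH2; rewrite ?inE ?Hs orbF.
Qed.

Lemma valid_uniq a t : uniq (valid a t).
Proof.
elim/strong_ind: a t => [[|x a'] IH] t //.
have U1 : forall t, uniq (valid a' t) by move=> ?; apply: IH.
have U2 : forall t, uniq (valid (behead a') t).
  by move=> ?; apply: IH; case: (a') => //= ? ?; rewrite ltnS leqnSn.
have Ic : forall c : bool, injective (cons c) by move=> c u v [].
clear IH; case: x; last by rewrite /= map_inj_uniq.
case: t => [|t]; first by rewrite /= map_inj_uniq.
case: a' U1 U2 => [|y a''] U1 U2.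
  by [].
have U3 : uniq (valid a'' t) := U2 t.
rewrite [valid (true :: _) _]/= cat_uniq !map_inj_uniq // U1 U3 andbT /=.
by apply/hasPn => z /mapP [z' _ ->]; rewrite mem_consmap.
Qed.

Definition g a t := size (valid a t).

Fixpoint p2 (a : seq bool) : nat :=
  match a with x :: a' => (x && nth false a' 0) + p2 a' | [::] => 0 end.
Fixpoint p3 (a : seq bool) : nat :=
  match a with x :: a' => [&& x, nth false a' 0 & nth false a' 1] + p3 a' | [::] => 0 end.

Lemma g0 a : g a 0 = 1.
Proof. by elim: a => // x a IH; rewrite /g /=; case: x; rewrite size_map. Qed.

Lemma g_false a t : g (false :: a) t = g a t.
Proof. by rewrite /g /= size_map. Qed.
Lemma g_true_nil t : g [:: true] t.+1 = 2.
Proof. by []. Qed.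
Lemma g_true_cons y a t : g [:: true, y & a] t.+1 = g (y :: a) t.+1 + g a t.
Proof. by rewrite /g /= size_cat !size_map. Qed.

Lemma closed_forms a :
  let w := count id a in
  [/\ g a 1 = 1 + w, g a 2 + p2 a = 1 + w + 'C(w, 2) &
      g a 3 + p2 a * w = 1 + w + 'C(w, 2) + 'C(w, 3) + p2 a + p3 a].
Proof.
elim/strong_ind: a => [[|x a'] IH] //=.
have [A1 A2 A3] := IH a' (ltnSn _).
case: x IH => IH /=; last by rewrite !g_false add0n.
case: a' IH A1 A2 A3 => [|y a''] IH A1 A2 A3.
  by rewrite !g_true_nil.
have [B1 B2 B3] := IH a'' (leqW (ltnSn _)).
rewrite !g_true_cons g0.
clear IH; move: A1 A2 A3 B1 B2 B3 => /=.
set W := count id a''; set z := nth false a'' 0.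
case: y => /=; rewrite ?add1n ?add0n !binS !bin1 ?bin0; case: z => /= A1 A2 A3 B1 B2 B3; split; lia.
Qed.

Lemma one_runs_cons x d : one_runs (x :: d) =
  x + count (fun i => nth false d i && ~~ nth false (x :: d) i) (iota 0 (size d)).
Proof. by rewrite /one_runs size_filter count_iotaS /= andbT. Qed.

Lemma C1_cons x y d :
  count (fun i => nth false (y :: d) i && ~~ nth false (x :: y :: d) i) (iota 0 (size (y :: d))) =
  (y && ~~ x) + count (fun i => nth false d i && ~~ nth false (y :: d) i) (iota 0 (size d)).
Proof. by rewrite count_iotaS. Qed.

Lemma len1_cons x d : one_runs_len1 (x :: d) =
  (x && ~~ nth false d 0) + count (fun i => [&& nth false d i, ~~ nth false (x :: d) i & ~~ nth false d i.+1]) (iota 0 (size d)).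
Proof. by rewrite /one_runs_len1 size_filter count_iotaS. Qed.

Lemma C2_cons x y d :
  count (fun i => [&& nth false (y :: d) i, ~~ nth false (x :: y :: d) i & ~~ nth false (y :: d) i.+1]) (iota 0 (size (y :: d))) =
  [&& y, ~~ x & ~~ nth false d 0] + count (fun i => [&& nth false d i, ~~ nth false (y :: d) i & ~~ nth false d i.+1]) (iota 0 (size d)).
Proof. by rewrite count_iotaS. Qed.

Lemma p2_rel d : p2 d + one_runs d = count id d.
Proof.
elim: d => [|x d IH] //; case: d IH => [|y d] IH; first by case: x.
move: IH; rewrite !one_runs_cons C1_cons /=.
by case: x; case: y => /=; lia.
Qed.

Lemma p3_rel d : p3 d + 2 * one_runs d = count id d + one_runs_len1 d.
Proof.
elim: d => [|x d IH] //; case: d IH => [|y d] IH; first by case: x.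
move: IH; rewrite !one_runs_cons !len1_cons C1_cons C2_cons /=.
by case: x; case: y; case: (nth false d 0) => /=; lia.
Qed.

Lemma runs_rel s : 0 < size s -> runs s = 1 + weight (dseq s).
Proof.
case: s => [|x0 s] // _.
rewrite /runs size_filter count_iotaS /weight /dseq count_map /=.
congr (_ + _); apply: eq_count => i /=.
by rewrite negb_eqb addbC.
Qed.

Lemma bin2_rel w : 'C(w, 2) * 2 + w = w * w.
Proof. elim: w => // w IH; rewrite binS bin1; lia. Qed.

Definition diffs {n} (y x : n.-tuple bool) :=
  [seq nth false y i != nth false x i | i <- iota 0 n].

Lemma size_diffs n (y x : n.-tuple bool) : size (diffs y x) = n.
Proof. by rewrite size_map size_iota. Qed.

Lemma nth_diffs n (y x : n.-tuple bool) i : i < n ->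
  nth false (diffs y x) i = (nth false y i != nth false x i).
Proof. by move=> Hi; rewrite (nth_map 0) ?size_iota // nth_iota. Qed.

Lemma nth_phi n (E : {set 'I_n}) (x : n.-tuple bool) (i : 'I_n) :
  nth false (phi E x) i = if i \in E then nth false x i.-1 else nth false x i.
Proof. by rewrite -tnth_nth /phi tnth_mktuple. Qed.

Lemma size_mask (s : seq bool) : 0 < size s -> size (false :: dseq s) = size s.
Proof. by case: s => // x s _; rewrite /= size_map size_iota. Qed.

Lemma nth_mask (s : seq bool) i : i < size s ->
  nth false (false :: dseq s) i = (0 < i) && (nth false s i.-1 != nth false s i).
Proof.
case: i => [|j] //= Hj.
have Hj' : j < (size s).-1 by rewrite -ltnS (ltn_predK Hj).
by rewrite /dseq (nth_map 0) ?size_iota // nth_iota // negb_eqb.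
Qed.

Lemma card_count n (P : pred nat) : #|[set i : 'I_n | P i]| = count P (iota 0 n).
Proof.
rewrite -sum1_count -(subn0 n) -/(index_iota 0 n) big_mkord sum1_card subn0.
by apply: eq_card => i; rewrite inE.
Qed.

Lemma PvE a t b : Pv a t b ->
  [/\ size b = size a, forall i, nth false b i -> nth false a i,
      forall i, ~~ (nth false b i && nth false b i.+1) & count id b <= t].
Proof.
case/and3P => /andP [/eqP Hs /allP Ha] /allP Hn Hc; split => // i.
  case: (ltnP i (size a)) => Hi; last by rewrite nth_default // Hs.
  by move=> Hb; have := Ha i; rewrite mem_iota add0n Hi Hb => /(_ isT).
case: (ltnP i (size b)) => Hi; last by rewrite nth_default.
by apply: Hn; rewrite mem_iota.
Qed.

Lemma mem_Phi n t (x y : n.-tuple bool) : 0 < n ->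
  (y \in Phi t x) = Pv (false :: dseq x) t (diffs y x).
Proof.
move=> Hn.
have Hsz : size (false :: dseq x) = n by rewrite size_mask size_tuple.
apply/imsetP/idP.
- case=> E; rewrite inE => /andP [/andP [g1 g2] Et] ->.
  have Hd : forall i : 'I_n, nth false (diffs (phi E x) x) i =
      (i \in E) && (nth false x i.-1 != nth false x i).
    by move=> i; rewrite nth_diffs // nth_phi; case: (i \in E); rewrite ?eqxx.
  rewrite /Pv /subm /nocons size_diffs Hsz eqxx /=.
  apply/and3P; split.
  + apply/allP => i; rewrite mem_iota add0n => /andP [_ Hi].
    have -> := Hd (Ordinal Hi).
    rewrite nth_mask ?size_tuple //=.
    apply/implyP => /andP [HE ->]; rewrite andbT.
    by move/forall_inP: g1 => /(_ _ HE).
  + apply/allP => i; rewrite mem_iota add0n => /andP [_ Hi].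
    case: (ltnP i.+1 n) => Hi1; last by rewrite (nth_default _ (_ : size _ <= i.+1)) ?size_diffs // andbF.
    have -> := Hd (Ordinal Hi); have -> := Hd (Ordinal Hi1).
    apply/negP => /andP [/andP [H1 _] /andP [H2 _]].
    by move/forall_inP: g2 => /(_ _ H1) /forall_inP /(_ _ H2) /=; rewrite eqxx.
  + rewrite /diffs count_map -card_count; apply: leq_trans Et.
    apply: subset_leq_card; apply/subsetP => i; rewrite inE.
    move=> H; have : nth false (phi E x) i != nth false x i := H.
    by rewrite -nth_diffs // Hd => /andP [].
- move=> HP; have [Hs Hm Hnc Hc] := PvE _ _ _ HP.
  exists [set i : 'I_n | nth false (diffs y x) i].
  + rewrite inE; apply/andP; split; last first.
      rewrite card_count; apply: leq_trans Hc.
      rewrite {2}/diffs count_map; apply/eq_leq/eq_in_count => i.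
      by rewrite mem_iota add0n => /andP [_ Hi]; rewrite nth_diffs.
    apply/andP; split.
      apply/forall_inP => i; rewrite inE => /Hm.
      by rewrite nth_mask ?size_tuple // => /andP [].
    apply/forall_inP => i; rewrite inE => Hi; apply/forall_inP => j; rewrite inE => Hj.
    apply/eqP => Hij; move: Hj; rewrite -Hij => Hj.
    by have := Hnc i; rewrite Hi Hj.
  + apply: eq_from_tnth => i; rewrite /phi tnth_mktuple inE (tnth_nth false).
    case: ifP => Hi.
      have := Hm _ Hi; rewrite nth_mask ?size_tuple // => /andP [_].
      move: Hi; rewrite nth_diffs //.
      by case: (nth false y i); case: (nth false x i); case: (nth false x i.-1).
    by move: Hi; rewrite nth_diffs //; case: (nth false y i); case: (nth false x i).
Qed.

Lemma card_Phi n t (x : n.-tuple bool) : 0 < n -> #|Phi t x| = g (false :: dseq x) t.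
Proof.
move=> Hn.
have Hsz : size (false :: dseq x) = n by rewrite size_mask size_tuple.
rewrite cardE /g -(size_map (fun y => diffs y x)); apply: perm_size.
apply: uniq_perm; [| exact: valid_uniq |].
- rewrite map_inj_uniq ?enum_uniq // => y1 y2 H.
  apply: eq_from_tnth => i; have := congr1 (fun s => nth false s i) H.
  rewrite !nth_diffs // !(tnth_nth false).
  by case: (nth false y1 i); case: (nth false y2 i); case: (nth false x i).
move=> z; rewrite mem_valid; apply/mapP/idP => [[y]|Hz].
  by rewrite mem_enum mem_Phi // => H ->.
have [Hs _ _ _] := PvE _ _ _ Hz.
have Ed : diffs [tuple nth false x i (+) nth false z i | i < n] x = z.
  apply: (@eq_from_nth _ false) => [|i]; rewrite size_diffs ?Hs ?Hsz // => Hi.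
  rewrite nth_diffs // -(tnth_nth false _ (Ordinal Hi)) tnth_mktuple /=.
  by case: (nth false x i); case: (nth false z i).
exists [tuple nth false x i (+) nth false z i | i < n] => //.
by rewrite mem_enum mem_Phi // Ed.
Qed.

Local Open Scope ring_scope.
Import GRing.Theory.

Theorem proposition2p1 (n : nat) (x : n.-tuple bool) :
  (1 <= n)%N ->
  let w := weight (dseq x) in
  let m := one_runs (dseq x) in
  let m1 := one_runs_len1 (dseq x) in
  [/\ #|Phi 1 x| = (1 + w)%N /\ (1 + w)%N = runs x,
      #|Phi 2 x| = (1 + m + 'C(w, 2))%N &
      (#|Phi 3 x|%:Z = 1 + m1%:Z + m%:Z * (w%:Z - 3) + ('C(w, 3))%:Z
                       - ('C(w, 2))%:Z + 2 * w%:Z)].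
Proof.
move=> Hn w m m1.
rewrite !card_Phi //.
have [A1 A2 A3] := closed_forms (false :: dseq x).
rewrite /= add0n -/(weight (dseq x)) -/w in A1 A2 A3.
have R2 := p2_rel (dseq x); rewrite -/m -/(weight _) -/w in R2.
have R3 := p3_rel (dseq x); rewrite -/m -/m1 -/(weight _) -/w in R3.
have B := bin2_rel w.
split.
- split=> //; rewrite runs_rel ?size_tuple //.
- lia.
- move: A3 R2 R3 B; set G := g _ 3; set P2 := p2 (dseq x); set P3 := p3 (dseq x).
  set C2 := 'C(w, 2); set C3 := 'C(w, 3).
  move=> A3 R2 R3 B.
  rewrite -R2 in A3 B *.
  lia.
Qed.
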